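(* Let $f,g$ be non-constant rational functions on $\mathbb P^1$ over $\mathbb F_q$ of the same degree $d\ge2$ such that $\Gamma_{f,g}=\{(P,Q)\in\mathbb P^1\times\mathbb P^1: f(P)=g(Q)\}$ is absolutely irreducible and reduced, and let $C_n=\{(P_1,\dots,P_n)\in(\mathbb P^1)^n : f(P_i)=g(P_{i+1}),\ 1\le i\le n-1\}$. A geometric point $(P_1,\dots,P_n)\in C_n$ is singular if and only if there exist $1\le i<j\le n$ such that $f$ is ramified at $P_i$ and $g$ is ramified at $P_j$. *)

(* Defs.v *)
From HB Require Import structures.
From mathcomp Require Import all_boot all_order all_algebra all_field.
Set Implicit Arguments. Unset Strict Implicit. Unset Printing Implicit Defensive.
Import Order.TTheory GRing.Theory Num.Theory.
Local Open Scope ring_scope.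

(* A rational function on P^1 over F is given by a pair (num, den) of
   coprime polynomials; its degree is max(deg num, deg den). *)
Definition rdeg (F : fieldType) (p q : {poly F}) : nat :=
  maxn (size p).-1 (size q).-1.

(* Points of P^1(K): [Some a] is the point [X0:X1] = [1:a] (affine
   coordinate x = a), [None] is the point at infinity [0:1]. *)

(* Local affine chart coordinate of a point: x for Some a (value a),
   u = X0/X1 for the point at infinity (value 0). *)
Definition coord (K : fieldType) (P : option K) : K := odflt 0 P.

(* The homogenisation (of degree d) of p, dehomogenised in the chart
   containing P, as a polynomial in the local chart coordinate. *)
Definition chart (F K : fieldType) (iota : {rmorphism F -> K}) (d : nat)
  (p : {poly F}) (P : option K) : {poly K} :=
  match P with
  | Some _ => map_poly iota p
  | None => \poly_(i < d.+1) iota p`_(d - i)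
  end.

(* homogeneous coordinate (up to the chart scaling) of p at P *)
Definition hval (F K : fieldType) (iota : {rmorphism F -> K}) (d : nat)
  (p : {poly F}) (P : option K) : K := (chart iota d p P).[coord P].

(* Ramification of f = p/q at the geometric point P: the ramification index
   (order of vanishing of  beta*N - alpha*D  at P in the local coordinate,
   where f(P) = [alpha : beta] = [N(P) : D(P)]) is > 1. *)
Definition ramified (F K : fieldType) (iota : {rmorphism F -> K}) (d : nat)
  (p q : {poly F}) (P : option K) : bool :=
  let N := chart iota d p P in let D := chart iota d q P in
  let t := coord P in
  (1 < mup t (D.[t] *: N - N.[t] *: D))%N.

(* Polynomials in four variables X0, X1, Y0, Y1 over K. *)
Definition R4 (K : fieldType) := {poly {poly {poly {poly K}}}}.
Definition cst4 (K : fieldType) (c : K) : R4 K := c%:P%:P%:P%:P.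
Definition vX0 (K : fieldType) : R4 K := 'X%:P%:P%:P.
Definition vX1 (K : fieldType) : R4 K := 'X%:P%:P.
Definition vY0 (K : fieldType) : R4 K := 'X%:P.
Definition vY1 (K : fieldType) : R4 K := 'X.

(* degree-d homogenisation of p in the variables (A, B) = (X0, X1),
   with affine coordinate x = X1 / X0 *)
Definition homog (F K : fieldType) (iota : {rmorphism F -> K}) (d : nat)
  (p : {poly F}) (A B : R4 K) : R4 K :=
  \sum_(i < d.+1) cst4 (iota p`_i) * A ^+ (d - i) * B ^+ i.

(* The bihomogeneous equation of Gamma_{f,g} = {(P,Q) : f(P) = g(Q)}
   in P^1 x P^1, with f = fN/fD, g = gN/gD of degree d. *)
Definition GammaPoly (F K : fieldType) (iota : {rmorphism F -> K}) (d : nat)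
  (fN fD gN gD : {poly F}) : R4 K :=
  homog iota d fN (vX0 K) (vX1 K) * homog iota d gD (vY0 K) (vY1 K)
  - homog iota d fD (vX0 K) (vX1 K) * homog iota d gN (vY0 K) (vY1 K).

Definition irreducible_elt (R : idomainType) (x : R) : Prop :=
  x != 0 /\ x \isn't a GRing.unit /\
  forall a b : R, x = a * b -> a \is a GRing.unit \/ b \is a GRing.unit.

Definition on_Cn (F K : fieldType) (iota : {rmorphism F -> K}) (d : nat)
  (fN fD gN gD : {poly F}) (n : nat) (P : 'I_n -> option K) : Prop :=
  forall i j : 'I_n, val j = (val i).+1 ->
    hval iota d fN (P i) * hval iota d gD (P j)
    = hval iota d fD (P i) * hval iota d gN (P j).

Definition extP (K : fieldType) (n : nat) (P : 'I_n -> option K) (k : nat)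
  : option K :=
  match (insub k : option 'I_n) with Some i => P i | None => None end.

(* Partial derivatives of the local equation
   E(s,t) = fN_P(s) gD_Q(t) - fD_P(s) gN_Q(t) of Gamma at (P,Q)
   with respect to the local coordinates s (of P) and t (of Q). *)
Definition dE1 (F K : fieldType) (iota : {rmorphism F -> K}) (d : nat)
  (fN fD gN gD : {poly F}) (P Q : option K) : K :=
  (chart iota d fN P)^`().[coord P] * hval iota d gD Q
  - (chart iota d fD P)^`().[coord P] * hval iota d gN Q.
Definition dE2 (F K : fieldType) (iota : {rmorphism F -> K}) (d : nat)
  (fN fD gN gD : {poly F}) (P Q : option K) : K :=
  hval iota d fN P * (chart iota d gD Q)^`().[coord Q]
  - hval iota d fD P * (chart iota d gN Q)^`().[coord Q].

(* Jacobian matrix at (P_1..P_n) of the n-1 local defining equations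
   E_i(t_i, t_{i+1}) = 0 of C_n in the product of local affine charts. *)
Definition jacCn (F K : fieldType) (iota : {rmorphism F -> K}) (d : nat)
  (fN fD gN gD : {poly F}) (n : nat) (P : 'I_n -> option K) : 'M[K]_(n.-1, n) :=
  \matrix_(i < n.-1, j < n)
    if val j == val i then dE1 iota d fN fD gN gD (extP P i) (extP P i.+1)
    else if val j == (val i).+1 then dE2 iota d fN fD gN gD (extP P i) (extP P i.+1)
    else 0.

(* C_n is a curve (dimension 1) cut out in (P^1)^n by n-1 equations;
   a point is singular iff the Jacobian criterion fails: rank < n - 1. *)
Definition singular_Cn (F K : fieldType) (iota : {rmorphism F -> K}) (d : nat)
  (fN fD gN gD : {poly F}) (n : nat) (P : 'I_n -> option K) : Prop :=
  (\rank (jacCn iota d fN fD gN gD P) < n.-1)%N.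

(* Main.v *)
Require Import Defs.
From HB Require Import structures.
From mathcomp Require Import all_boot all_order all_algebra all_field.
From mathcomp Require Import ring zify.
Import Order.TTheory GRing.Theory Num.Theory.
Local Open Scope ring_scope.
Set Implicit Arguments. Unset Strict Implicit.

Section Aux.
Variable K : fieldType.

Lemma sq_dvd_root (h : {poly K}) t :
  root h t -> (('X - t%:P) ^+ 2 %| h) = root h^`() t.
Proof.
move=> /factor_theorem [q ->].
rewrite derivM derivXsubC mulr1 rootE !hornerE subrr mulr0 add0r.
rewrite expr2 dvdp_mul2r ?polyXsubC_eq0 // dvdp_XsubCl.
by [].
Qed.

Lemma mup_gt1 (h : {poly K}) t :
  h != 0 -> root h t -> (1 < mup t h)%N = root h^`() t.
Proof. by move=> hn0 rt; rewrite mup_geq // sq_dvd_root. Qed.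

Lemma scal_lem (p0 q0 al be x y : K) :
  (p0 != 0) || (q0 != 0) -> (al != 0) || (be != 0) -> p0 * be = q0 * al ->
  (x * be - y * al == 0) = (q0 * x - p0 * y == 0).
Proof.
have [q00|q0n0] := eqVneq q0 0.
  rewrite q00 orbF mul0r => p0n /= abn /eqP; rewrite mulf_eq0 (negPf p0n) /= => /eqP be0.
  move: abn; rewrite be0 eqxx orbF => aln.
  rewrite mulr0 mul0r !sub0r !oppr_eq0 !mulf_eq0 (negPf aln) (negPf p0n) orbF.
  by [].
move=> _ abn e.
have ben : be != 0.
  apply/negP => /eqP be0; move: e abn; rewrite be0 mulr0 eqxx orbF => /esym/eqP.
  by rewrite mulf_eq0 (negPf q0n0) /= => ->.
have -> : al = p0 * be / q0 by rewrite e mulrC mulKf.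
have -> : x * be - y * (p0 * be / q0) = (be / q0) * (q0 * x - p0 * y).
  field; exact: q0n0.
have bq : be / q0 != 0 by rewrite mulf_neq0 ?invr_eq0.
by rewrite mulf_eq0 (negPf bq).
Qed.
End Aux.

Lemma prop_const (K : fieldType) (A B : {poly K}) c e :
  coprimep A B -> (c != 0) || (e != 0) -> c *: A = e *: B ->
  (size A <= 1)%N && (size B <= 1)%N.
Proof.
wlog cn : A B c e / c != 0.
  move=> W cop ce Heq; have [c0|cn] := eqVneq c 0; last exact: W cop ce Heq.
  move: ce; rewrite c0 eqxx /= => en.
  rewrite andbC; apply: (W B A e c) => //; first by rewrite coprimep_sym.
  by rewrite en.
move=> cop _ Heq.
have eA : A = (e / c) *: B by rewrite mulrC -scalerA -Heq scalerA mulVf // scale1r.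
have dv : B %| A by rewrite eA -mul_polyC dvdp_mull.
have := coprimep_dvdr dv cop; rewrite coprimepp => /eqP sB.
by rewrite eA (leq_trans (size_scale_leq _ _)) sB.
Qed.

Section Charts.
Variables (F K : fieldType) (iota : {rmorphism F -> K}) (d : nat).

Lemma rdeg_size (p q : {poly F}) : rdeg p q = d -> (size p <= d.+1)%N && (size q <= d.+1)%N.
Proof.
rewrite /rdeg => <-; apply/andP; split.
  by apply: leq_trans (leqSpred _) _; rewrite ltnS leq_maxl.
by apply: leq_trans (leqSpred _) _; rewrite ltnS leq_maxr.
Qed.

Lemma chart_prop (p q : {poly F}) X c e : (size p <= d.+1)%N -> (size q <= d.+1)%N ->
  c *: chart iota d p X = e *: chart iota d q X ->
  c *: map_poly iota p = e *: map_poly iota q.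
Proof.
case: X => [a|] //= sp sq H; apply/polyP => k; rewrite !coefZ !coef_map /=.
have [kd|kd] := leqP k d.
  have := congr1 (fun r : {poly K} => r`_(d - k)) H.
  by rewrite /= !coefZ !coef_poly ltnS leq_subr subKn.
by rewrite !nth_default ?rmorph0 ?mulr0 //; apply: leq_trans kd.
Qed.

Lemma hval_nz (p q : {poly F}) X : coprimep p q -> rdeg p q = d -> (0 < d)%N ->
  (hval iota d p X != 0) || (hval iota d q X != 0).
Proof.
move=> cop rd d0; case: X => [a|]; rewrite /hval /=.
  have cop' : coprimep (map_poly iota p) (map_poly iota q) by rewrite coprimep_map.
  have [r|nr] := boolP (root (map_poly iota p) a); last by rewrite -rootE nr.
  by rewrite orbC (coprimep_root cop' r).
rewrite !horner_coef0 !coef_poly /= subn0 !fmorph_eq0.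
move: rd; rewrite /rdeg.
have [h|h] := leqP (size p).-1 (size q).-1.
  move=> sq; apply/orP; right.
  have qn0 : q != 0 by rewrite -size_poly_eq0; apply/eqP => s0; move: sq d0; rewrite s0 => <-.
  by rewrite -sq -lead_coefE lead_coef_eq0.
move=> sp; apply/orP; left.
have pn0 : p != 0 by rewrite -size_poly_eq0; apply/eqP => s0; move: sp d0; rewrite s0 => <-.
by rewrite -sp -lead_coefE lead_coef_eq0.
Qed.

Lemma ram_iff (p q : {poly F}) X : coprimep p q -> rdeg p q = d -> (0 < d)%N ->
  ramified iota d p q X =
  (hval iota d q X * (chart iota d p X)^`().[Defs.coord X]
   - hval iota d p X * (chart iota d q X)^`().[Defs.coord X] == 0).
Proof.
move=> cop rd d0; have nz := @hval_nz p q X cop rd d0.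
have /andP[sp sq] := rdeg_size rd.
rewrite /ramified /hval in nz *.
set N := chart iota d p X; set D := chart iota d q X; set t := Defs.coord X.
have hn0 : D.[t] *: N - N.[t] *: D != 0.
  apply/negP; rewrite subr_eq0 => /eqP H.
  have := chart_prop sp sq H.
  have cop' : coprimep (map_poly iota p) (map_poly iota q) by rewrite coprimep_map.
  move/(prop_const cop'); rewrite orbC => /(_ nz) /andP[].
  rewrite !size_map_poly => s1 s2; move: rd; rewrite /rdeg => rd.
  move: d0; rewrite -rd; case: (size p) s1 => [|[|]] //; case: (size q) s2 => [|[|]] //.
rewrite mup_gt1 //; last by rewrite rootE !hornerE mulrC subrr.
by rewrite rootE derivB !derivZ !hornerE.
Qed.
End Charts.

Section Bidiag.
Variables (K : fieldType) (m : nat) (a b : nat -> K).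

Definition BD : 'M[K]_(m, m.+1) :=
  \matrix_(i < m, j < m.+1)
    (if val j == val i then a i else if val j == (val i).+1 then b i else 0).

Definition colf (c : nat -> K) (k : nat) : K :=
  c k * a k + (if k is k'.+1 then c k' * b k' else 0).

Definition c_of (v : 'rV[K]_m) (k : nat) : K :=
  oapp (fun i : 'I_m => v 0 i) 0 (insub k).

Lemma c_ofE v (i : 'I_m) : c_of v i = v 0 i.
Proof. by rewrite /c_of valK. Qed.

Lemma c_of0 v k : (m <= k)%N -> c_of v k = 0.
Proof. by move=> h; rewrite /c_of insubN // -leqNgt. Qed.

Lemma sum_ind (G : nat -> K) k n :
  \sum_(i < n) (if val i == k then G i else 0) = if (k < n)%N then G k else 0.
Proof.
elim: n => [|n IH]; first by rewrite big_ord0.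
rewrite big_ord_recr /= IH.
case: (ltngtP k n) => h.
- by rewrite (ltn_trans h (ltnSn _)) addr0.
- by rewrite ltnNge h addr0.
- by rewrite h ltnSn add0r.
Qed.

Lemma colE v (k : 'I_m.+1) : (v *m BD) 0 k = colf (c_of v) k.
Proof.
rewrite !mxE /colf.
have e1 : forall i : 'I_m, v 0 i * BD i k =
   (if val i == val k then c_of v i * a i else 0) +
   (if val i == (val k).-1 then (if val k is _.+1 then c_of v i * b i else 0) else 0).
  move=> i; rewrite /BD mxE c_ofE.
  case: k => [[|k] hk] /=.
    by case: i => [[|i] hi] /=; rewrite ?mulr0 ?addr0.
  rewrite eqSS (eq_sym k.+1) (eq_sym k).
  have [->|n1] := eqVneq (val i) k.+1.
    by rewrite (gtn_eqF (ltnSn k)) addr0.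
  rewrite add0r.
  by case: eqP; rewrite ?mulr0.
rewrite (eq_bigr _ (fun i _ => e1 i)) big_split /=.
rewrite (sum_ind (fun i => c_of v i * a i)).
rewrite (sum_ind (fun i => if val k is _.+1 then c_of v i * b i else 0)).
clear e1; case: k => [k hk] /=.
have guard : forall (X : nat -> K) j,
   (if (j < m)%N then c_of v j * X j else 0) = c_of v j * X j.
  by move=> X j; case: ltnP => // h; rewrite c_of0 // mul0r.
rewrite (guard a); case: k hk => [|k] hk /=; first by rewrite if_same.
by rewrite (guard b).
Qed.
End Bidiag.

Section Bidiag2.
Variables (K : fieldType) (m : nat) (a b : nat -> K).

Lemma rank_lt_iff : (\rank (BD m a b) < m)%N <->
  exists v : 'rV[K]_m, v != 0 /\ v *m BD m a b = 0.
Proof.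
split.
  move=> h; have : ~~ row_free (BD m a b) by rewrite /row_free neq_ltn h.
  rewrite -kermx_eq0 => /rowV0Pn [v /sub_kermxP vM vn0]; by exists v.
move=> [v [vn0 vM]]; rewrite ltn_neqAle rank_leq_row andbT; apply/negP => rf.
by move: vn0; rewrite -(mulmx_free_eq0 _ rf) vM eqxx.
Qed.

Lemma col_zero v : v *m BD m a b = 0 <->
  forall k, (k <= m)%N -> colf a b (c_of v) k = 0.
Proof.
split.
  move=> h k km; have := congr1 (fun M : 'M_(1, m.+1) => M 0 (Ordinal (km : (k < m.+1)%N))) h.
  by rewrite colE mxE.
move=> h; apply/rowP => k; rewrite colE mxE; apply: h; rewrite -ltnS; exact: ltn_ord.
Qed.

Variables (i j : nat).
Fixpoint bd_c (k : nat) : K :=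
  match k with
  | 0 => if i == 0%N then 1 else 0
  | k'.+1 => if k'.+1 == i then 1 else
             if (i < k'.+1 <= j)%N then - bd_c k' * b k' / a k'.+1 else 0
  end.

Lemma bd_c0 k : ((k < i) || (j < k))%N -> (i <= j)%N -> bd_c k = 0.
Proof.
case: k => [|k] /= h hij.
  by case: eqP => // e; exfalso; move: h; rewrite e; lia.
case: eqP => [e|_]; first by exfalso; move: h; rewrite -e; lia.
by case: ifP => // h2; exfalso; move: h h2; lia.
Qed.

Lemma bd_ci : bd_c i = 1.
Proof.
have : forall k, k = i -> bd_c k = 1 by case=> [|k] /= <-; rewrite ?eqxx.
exact.
Qed.

Lemma bd_cS k : (i < k.+1 <= j)%N -> bd_c k.+1 = - bd_c k * b k / a k.+1.
Proof. by move=> h /=; rewrite h; case: eqP => // e; exfalso; move: h; rewrite e; lia. Qed.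

End Bidiag2.

Lemma c_of_row (K : fieldType) m (f : nat -> K) k :
  c_of (\row_(l < m) f l) k = if (k < m)%N then f k else 0.
Proof.
rewrite /c_of; case: insubP => [u ku <-|nk] /=; first by rewrite mxE (valP u).
by rewrite (negPf nk).
Qed.

Lemma bidiag_rank (K : fieldType) m (a b : nat -> K) :
  (\rank (BD m a b) < m)%N <->
  exists i j, [/\ (i <= j)%N, (j < m)%N, a i = 0 & b j = 0].
Proof.
rewrite rank_lt_iff; split.
  move=> [v [vn0 /col_zero vM]].
  have [i0 vi0] := rV0Pn _ vn0.
  set c := c_of v.
  have exP : exists k, c k != 0 by exists i0; rewrite /c c_ofE.
  have ltm : forall k, c k != 0 -> (k < m)%N.
    by move=> k; apply: contraR; rewrite -leqNgt => h; rewrite /c c_of0.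
  have ub : forall k, c k != 0 -> (k <= m)%N by move=> k /ltm /ltnW.
  case: (ex_minnP exP) => i ci imin.
  case: (ex_maxnP exP ub) => j cj jmax.
  exists i, j; split.
  - exact: jmax.
  - exact: ltm.
  - have := vM i (ltnW (ltm _ ci)); rewrite /colf -/c.
    have -> : (if i is i'.+1 then c i' * b i' else 0) = 0.
      case: i ci imin => [|i'] // ci imin.
      case: (eqVneq (c i') 0) => [->|/imin h]; first by rewrite mul0r.
      by rewrite ltnn in h.
    by rewrite addr0 => /eqP; rewrite mulf_eq0 (negPf ci) => /eqP.
  - have := vM j.+1 (ltm _ cj); rewrite /colf -/c.
    case: (eqVneq (c j.+1) 0) => [->|/jmax h]; last by rewrite ltnn in h.
    by rewrite mul0r add0r => /eqP; rewrite mulf_eq0 (negPf cj) => /eqP.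
move=> [i [j [ij jm ai bj]]].
have exP : exists k, (k <= j)%N && (a k == 0) by exists i; rewrite ij ai eqxx.
have ub : forall k, (k <= j)%N && (a k == 0) -> (k <= j)%N by move=> k /andP[].
case: (ex_maxnP exP ub) => i' /andP[i'j /eqP ai'] imax.
set c := bd_c a b i' j.
exists (\row_(l < m) c l); split.
  apply/rV0Pn; exists (Ordinal (leq_ltn_trans i'j jm)); rewrite mxE /c bd_ci.
  exact: oner_neq0.
apply/col_zero => k km.
have cE : forall l, c_of (\row_(l0 < m) c l0) l = c l.
  move=> l; rewrite c_of_row; case: ltnP => // h.
  by rewrite /c bd_c0 //; apply/orP; right; lia.
rewrite /colf.
case: k km => [|k] km /=; rewrite ?cE.
  rewrite /c /= addr0; have [e|_] := eqVneq i' 0%N; last by rewrite mul0r.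
  by rewrite e in ai' *; rewrite ?eqxx mul1r ai'.
have [kj|kj] := leqP k.+1 j.
  case: (ltngtP k.+1 i') => h.
  - by rewrite /c !bd_c0 ?mul0r ?addr0 //; apply/orP; left; lia.
  - have an : a k.+1 != 0.
      apply/eqP => a0; have := imax k.+1; rewrite kj a0 eqxx => /(_ isT); lia.
    rewrite /c bd_cS ?h ?kj //. field. exact: an.
  - by rewrite h ai' mulr0 add0r /c bd_c0 ?mul0r //; apply/orP; left; lia.
rewrite /c (@bd_c0 _ a b i' j k.+1) ?mul0r ?add0r; last first.
  - lia.
  - by apply/orP; right.
have [->|kn] := eqVneq k j; first by rewrite bj mulr0.
by rewrite bd_c0 ?mul0r //; apply/orP; right; lia.
Qed.

Lemma extPE (K : fieldType) n (P : 'I_n -> option K) k (hk : (k < n)%N) :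
  extP P k = P (Ordinal hk).
Proof.
rewrite /extP; case: insubP => [u _ e|]; last by rewrite hk.
by congr P; apply: val_inj.
Qed.

Unset Implicit Arguments.
Set Strict Implicit.

Theorem corollary2p5 (F : finFieldType) (K : closedFieldType)
  (iota : {rmorphism F -> K})
  (K_alg : forall x : K, exists2 r : {poly F}, r != 0 & root (map_poly iota r) x)
  (fN fD gN gD : {poly F}) (d : nat)
  (cop_f : coprimep fN fD) (cop_g : coprimep gN gD)
  (deg_f : rdeg fN fD = d) (deg_g : rdeg gN gD = d) (d_ge2 : (2 <= d)%N)
  (Gamma_irr_red : irreducible_elt (GammaPoly iota d fN fD gN gD))
  (n : nat) (n_gt0 : (0 < n)%N) (P : 'I_n -> option K)
  (P_on : on_Cn iota d fN fD gN gD P) :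
  singular_Cn iota d fN fD gN gD P <->
  exists i j : 'I_n, (i < j)%N /\ ramified iota d fN fD (P i) /\ ramified iota d gN gD (P j).
Proof.
have d0 : (0 < d)%N by apply: leq_trans d_ge2.
case: n n_gt0 P P_on => // m _ P P_on.
set aa := fun k : nat => dE1 iota d fN fD gN gD (extP P k) (extP P k.+1).
set bb := fun k : nat => dE2 iota d fN fD gN gD (extP P k) (extP P k.+1).
have -> : singular_Cn iota d fN fD gN gD P <-> (\rank (BD m aa bb) < m)%N by [].
rewrite bidiag_rank.
have key : forall (I J : 'I_m.+1), val J = (val I).+1 ->
   (aa I == 0) = ramified iota d fN fD (P I) /\
   (bb I == 0) = ramified iota d gN gD (P J).
  move=> I J e.
  have hJ : (I.+1 < m.+1)%N by move: (ltn_ord J); rewrite e.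
  have eI : extP P I = P I by rewrite (extPE P (ltn_ord I)); congr P; apply: val_inj.
  have eJ : extP P I.+1 = P J by rewrite (extPE P hJ); congr P; apply: val_inj.
  have on := P_on I J e.
  rewrite /aa /bb /dE1 /dE2 eI eJ !ram_iff //.
  split.
    apply: scal_lem on; first by rewrite hval_nz.
    by rewrite hval_nz.
  rewrite -oppr_eq0 opprB (mulrC (hval _ _ _ (P I))) (mulrC (hval _ _ _ (P I))).
  apply: scal_lem; first by rewrite hval_nz.
    by rewrite hval_nz.
  by rewrite mulrC -on mulrC.
split.
  move=> [i [j [ij jm ai bj]]].
  have hi : (i < m.+1)%N by lia.
  have hj : (j.+1 < m.+1)%N by [].
  have hj' : (j < m.+1)%N by apply: ltnW.
  exists (Ordinal hi), (Ordinal hj); split => /=; first by rewrite ltnS.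
  have hi1 : (i.+1 < m.+1)%N by lia.
  have [k1 _] := key (Ordinal hi) (Ordinal hi1) erefl.
  have [_ k2] := key (Ordinal hj') (Ordinal hj) erefl.
  by rewrite -k1 -k2 /= ai bj eqxx.
move=> [I [J [IJ [rf rg]]]].
have oJ := ltn_ord J.
have hJ : (J.-1 < m)%N by lia.
have hJ' : (J.-1 < m.+1)%N by lia.
have eJ : val J = (val (Ordinal hJ')).+1 by rewrite /=; lia.
have hI : (I < m)%N by lia.
exists (nat_of_ord I), J.-1; split => //.
- lia.
- have [k1 _] := key I (Ordinal (hI : (I.+1 < m.+1)%N)) erefl.
  by apply/eqP; rewrite k1.
- have [_ k2] := key (Ordinal hJ') J eJ.
  by apply/eqP; rewrite k2.
Qed.
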